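(* Let $f\in\mathbb F_q[X,Y]$ be a permutation group polynomial with permutation polynomial tuple $\underline\beta_f=(\beta_0,\dots,\beta_{q-1})$, and let $h$ be a permutation of $\mathbb F_q$ that intersects $\beta_i$ simply for every $i\in\{0,\dots,q-1\}$. Then $(h\beta_0,\dots,h\beta_{q-1})$ is a permutation polynomial tuple, and the LPP $g$ associated with it is a companion of $f$.
   Context: $q$ is a prime power and $\mathbb F_q=\{c_0,\dots,c_{q-1}\}$ is a fixed enumeration; $\mathfrak S_q$ is the symmetric group of permutations of $\mathbb F_q$, composed right to left, $(\sigma\tau)(x)=\sigma(\tau(x))$. Every function $\mathbb F_q^2\to\mathbb F_q$ is identified with the unique polynomial in $\mathbb F_q[X,Y]$ of degree $<q$ in each variable representing it. $f\in\mathbb F_q[X,Y]$ is a local permutation polynomial (LPP) if $x\mapsto f(x,y_0)$ and $y\mapsto f(x_0,y)$ are permutations of $\mathbb F_q$ for all $x_0,y_0\in\mathbb F_q$. A permutation polynomial tuple is $(\beta_0,\dots,\beta_{q-1})\in\mathfrak S_q^q$ such that $\beta_i^{-1}\beta_j$ has no fixed point whenever $i\ne j$. LPPs $f$ correspond bijectively to permutation polynomial tuples $\underline\beta_f=(\beta_0,\dots,\beta_{q-1})$ via $f(x,\beta_i(x))=c_i$ for all $x\in\mathbb F_q$ and all $i$. An LPP $f$ is a permutation group polynomial if $\{\beta_0,\dots,\beta_{q-1}\}$ is a subgroup of $\mathfrak S_q$. Two LPPs $f,g$ are orthogonal (companions of each other) if for every $(a,b)\in\mathbb F_q^2$ the system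 $f(X,Y)=a$, $g(X,Y)=b$ has exactly one solution in $\mathbb F_q^2$; a companion of $f$ is an LPP orthogonal to $f$. Two permutations $h_1,h_2$ of $\mathbb F_q$ intersect simply if there is exactly one $c\in\mathbb F_q$ with $h_1(c)=h_2(c)$. *)

(* Defs.v *)
From HB Require Import structures.
From mathcomp Require Import all_boot all_algebra all_fingroup all_field.
Set Implicit Arguments. Unset Strict Implicit. Unset Printing Implicit Defensive.

(* Functions F_q^2 -> F_q are identified with reduced polynomials; we model
   them directly as curried functions F -> F -> F. *)

Section LPP.
Variable F : finFieldType.

Definition is_LPP (f : F -> F -> F) : Prop :=
  (forall y0 : F, bijective (fun x => f x y0)) /\
  (forall x0 : F, bijective (fun y => f x0 y)).

Definition is_ppt (beta : 'I_#|F| -> {perm F}) : Prop :=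
  forall i j : 'I_#|F|, i != j -> forall x : F, ((beta i)^-1)%g (beta j x) != x.

Definition is_tuple_of (c : 'I_#|F| -> F) (f : F -> F -> F)
    (beta : 'I_#|F| -> {perm F}) : Prop :=
  forall (i : 'I_#|F|) (x : F), f x (beta i x) = c i.

Definition orthogonal (f g : F -> F -> F) : Prop :=
  forall a b : F, exists! p : F * F, f p.1 p.2 = a /\ g p.1 p.2 = b.

Definition companion (f g : F -> F -> F) : Prop := is_LPP g /\ orthogonal f g.

Definition intersect_simply (h1 h2 : {perm F}) : Prop :=
  #|[set x : F | h1 x == h2 x]| = 1%N.

(* composition h o b (right-to-left, (h b)(x) = h (b x)); mathcomp's perm
   product is left-to-right, so this is (b * h)%g. *)
Definition perm_after (h b : {perm F}) : {perm F} := (b * h)%g.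

End LPP.

(* Main.v *)
Require Import Defs.
From HB Require Import structures.
From mathcomp Require Import all_boot all_algebra all_fingroup all_field.

Theorem lemma4p4 (F : finFieldType) (c : 'I_#|F| -> F) (hc : bijective c)
  (f : F -> F -> F) (beta : 'I_#|F| -> {perm F})
  (hf : is_LPP f) (hbeta : is_tuple_of c f beta)
  (hgrp : group_set [set beta i | i : 'I_#|F|])
  (h : {perm F}) (hh : forall i : 'I_#|F|, intersect_simply h (beta i)) :
  is_ppt (fun i => perm_after h (beta i)) /\
  (exists g, is_LPP g /\ is_tuple_of c g (fun i => perm_after h (beta i))) /\
  (forall g, is_LPP g -> is_tuple_of c g (fun i => perm_after h (beta i)) ->
     companion f g).
Proof.
have cinj : injective c := bij_inj hc.
have finj : forall x, injective (f x).
  by move=> x; case: (hf.2 x) => g1 K1 _; apply: can_inj K1.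
have bx : forall i j x, beta i x = beta j x -> i = j.
  by move=> i j x E; apply: cinj; rewrite -(hbeta i x) -(hbeta j x) E.
have pa : forall i x, perm_after h (beta i) x = h (beta i x).
  by move=> i x; rewrite /perm_after permM.
split.
  move=> i j ij x; apply/eqP => E.
  move: E; rewrite /perm_after invMg permM permM permK => E.
  have E2 : beta j x = beta i x by rewrite -{2}E permKV.
  by move: ij; rewrite (bx _ _ _ E2) eqxx.
have hinj : forall x, injective (fun i => h (beta i x)).
  by move=> x i j /perm_inj; apply: bx.
have ex : forall x y, exists i, h (beta i x) = y.
  move=> x y; have := inj_card_onto (hinj x) (eq_leq (esym (card_ord _))) => /(_ y) /codomP [i ->].
  by exists i.
split.
  pose idx x y := odflt (enum_rank y)
                     [pick i | h (beta i x) == y].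
  have idxP : forall x y, h (beta (idx x y) x) = y.
    move=> x y; rewrite /idx; case: pickP => [i /eqP //|H].
    by case: (ex x y) => i E; move: (H i); rewrite E eqxx.
  exists (fun x y => c (idx x y)); split.
    split.
      move=> y0; apply: injF_bij => x1 x2 /= /cinj E.
      apply: (@perm_inj _ (beta (idx x1 y0))); apply: (@perm_inj _ h).
      by rewrite idxP E idxP.
    move=> x0; apply: injF_bij => y1 y2 /= /cinj E.
    by rewrite -(idxP x0 y1) -(idxP x0 y2) E.
  move=> i x; rewrite pa; congr c; apply: (hinj x); by rewrite idxP.
move=> g hg hgt; split => //.
have ginj : forall x, injective (g x).
  by move=> x; case: (hg.2 x) => g1 K1 _; apply: can_inj K1.
pose G := Group hgrp.
have key : forall i j, exists x0, forall x, (beta i x == h (beta j x)) = (x == x0).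
  move=> i j.
  have : ((beta j)^-1 * beta i)%g \in G by apply: groupM; [rewrite groupV|]; apply: imset_f.
  case/imsetP => k _ Ek.
  have := hh k; rewrite /intersect_simply => /eqP /cards1P [z0 Hz].
  exists (((beta j)^-1)%g z0) => x.
  have := congr1 (fun A : {set F} => beta j x \in A) Hz.
  rewrite /= !inE -Ek permM permK => H; rewrite eq_sym H.
  apply/eqP/eqP => [<-|->]; first by rewrite permK.
  by rewrite permKV.
move=> a b.
case: hc => c' K1 K2.
case: (key (c' a) (c' b)) => x0 Hx0.
have E0 : beta (c' a) x0 = h (beta (c' b) x0) by apply/eqP; rewrite Hx0.
exists (x0, beta (c' a) x0); split.
  split; first by rewrite /= hbeta K2.
  by rewrite /= E0 -pa hgt K2.
case=> x y /= [Ef Eg].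
have Hy : y = beta (c' a) x by apply: (finj x); rewrite Ef hbeta K2.
have Hy2 : y = h (beta (c' b) x) by apply: (ginj x); rewrite Eg -pa hgt K2.
have : x == x0 by rewrite -Hx0 -Hy Hy2.
by move/eqP => Ex; rewrite Hy Ex.
Qed.
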